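(* Let $E=\mathbb{Q}(i,\sqrt5)$, let $\tau=(1+\sqrt5)/2$, and let $\sigma$ be the automorphism of $E$ with $\sigma(i)=i$ and $\sigma(\sqrt5)=-\sqrt5$. For a real number $N\ge 1$ let $\mathbf{L}(N)$ be the set of numbers $x=(a+bi)+(c+di)\tau\in E$ with $a,b,c,d\in\mathbb{Z}$ and $|a|,|b|,|c|,|d|\le N$. For $x_1,x_2\in E$ put $$X(x_1,x_2)=\begin{pmatrix} x_1 & \sigma(x_1)\\ i\,x_2 & \sigma(x_2)\end{pmatrix},\qquad D(N_1,N_2)=\min_{x_1\in\mathbf{L}(N_1)\setminus\{0\},\ x_2\in\mathbf{L}(N_2)\setminus\{0\}}\left|\det X(x_1,x_2)\right|.$$ Then there exists a constant $K>0$ such that for all $N\ge1$, $$D(N^{3/5},N^{2/5})\le\frac{K}{N}.$$ In particular, there exist constants $C_\ell,C_u>0$ such that for all sufficiently large $N$, $$\frac{C_\ell}{N^2}\le D(N,N)\le\frac{C_u}{N^{5/3}},$$ i.e. the decay exponent of this code lies between $5/3$ and $2$.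
   Context: This is the two-user single-antenna Badr–Belfiore multiuser MIMO code; $\det X(x_1,x_2)\neq0$ whenever $x_1,x_2\neq0$. A code is said to decay with exponent at least $\delta_1$ if $D(N,N)\le C_uN^{-\delta_1}$ and with exponent at most $\delta_2$ if $D(N,N)\ge C_\ell N^{-\delta_2}$, for positive constants $C_u,C_\ell$. *)

(* Defs.v *)
From Stdlib Require Import Reals ZArith.
From Coquelicot Require Import Coquelicot.
Open Scope R_scope.

Definition tau : C := RtoC ((1 + sqrt 5) / 2).
Definition tau_conj : C := RtoC ((1 - sqrt 5) / 2).

Definition elemE (a b c d : Z) : C :=
  Cplus (Cplus (RtoC (IZR a)) (Cmult (RtoC (IZR b)) Ci))
        (Cmult (Cplus (RtoC (IZR c)) (Cmult (RtoC (IZR d)) Ci)) tau).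

(* sigma(x) where sigma fixes i and sends sqrt 5 to -sqrt 5 (so tau to tau_conj);
   sigma is Q-linear, so sigma((a+bi)+(c+di)tau) = (a+bi)+(c+di)sigma(tau). *)
Definition sigmaE (a b c d : Z) : C :=
  Cplus (Cplus (RtoC (IZR a)) (Cmult (RtoC (IZR b)) Ci))
        (Cmult (Cplus (RtoC (IZR c)) (Cmult (RtoC (IZR d)) Ci)) tau_conj).

Definition boxN (N : R) (a b c d : Z) : Prop :=
  Rabs (IZR a) <= N /\ Rabs (IZR b) <= N /\ Rabs (IZR c) <= N /\ Rabs (IZR d) <= N.

Definition detX (x1 sx1 x2 sx2 : C) : C :=
  Cminus (Cmult x1 sx2) (Cmult sx1 (Cmult Ci x2)).

Definition det_values (N1 N2 : R) (r : R) : Prop :=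
  exists a1 b1 c1 d1 a2 b2 c2 d2 : Z,
    boxN N1 a1 b1 c1 d1 /\ boxN N2 a2 b2 c2 d2 /\
    elemE a1 b1 c1 d1 <> RtoC 0 /\ elemE a2 b2 c2 d2 <> RtoC 0 /\
    r = Cmod (detX (elemE a1 b1 c1 d1) (sigmaE a1 b1 c1 d1)
                   (elemE a2 b2 c2 d2) (sigmaE a2 b2 c2 d2)).

(* D(N1,N2): the minimum (= infimum, the set being finite and nonempty for
   N1,N2 >= 1) of det_values. *)
Definition Dmin (N1 N2 : R) : R := real (Glb_Rbar (det_values N1 N2)).

(* Main.v *)
Require Import Defs.
From Stdlib Require Import Reals ZArith Lra Lia Psatz Nsatz.
From Coquelicot Require Import Coquelicot.
Open Scope R_scope.

Definition tt : R := (1 + sqrt 5) / 2.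
Definition tc : R := (1 - sqrt 5) / 2.

Lemma s5 : sqrt 5 * sqrt 5 = 5.
Proof. apply sqrt_sqrt; lra. Qed.
Lemma s5pos : 2 < sqrt 5 < 3.
Proof.
  split.
  - rewrite <- (sqrt_square 2) by lra. apply sqrt_lt_1; lra.
  - rewrite <- (sqrt_square 3) by lra. apply sqrt_lt_1; lra.
Qed.
Lemma tt_eq : tt * tt = tt + 1.
Proof. unfold tt. replace ((1+sqrt 5)/2 * ((1+sqrt 5)/2)) with ((1 + 2*sqrt 5 + sqrt 5 * sqrt 5)/4) by field. rewrite s5. field. Qed.
Lemma tc_eq : tc * tc = tc + 1.
Proof. unfold tc. replace ((1-sqrt 5)/2 * ((1-sqrt 5)/2)) with ((1 - 2*sqrt 5 + sqrt 5 * sqrt 5)/4) by field. rewrite s5. field. Qed.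
Lemma tc_tt : tc = 1 - tt.
Proof. unfold tc, tt. field. Qed.
Lemma tt_bnd : 3/2 < tt < 2.
Proof. unfold tt; pose proof s5pos; lra. Qed.

Record Q4 := mkQ { qa : Z; qb : Z; qc : Z; qd : Z }.

Definition evt (t : R) (q : Q4) : C :=
  (IZR (qa q) + IZR (qc q) * t, IZR (qb q) + IZR (qd q) * t).

Lemma ev_elem a b c d : elemE a b c d = evt tt (mkQ a b c d).
Proof.
  unfold elemE, tau, evt, Cplus, Cmult, RtoC, Ci; cbn [fst snd qa qb qc qd].
  fold tt. f_equal; ring.
Qed.
Lemma evs_sigma a b c d : sigmaE a b c d = evt tc (mkQ a b c d).
Proof.
  unfold sigmaE, tau_conj, evt, Cplus, Cmult, RtoC, Ci; cbn [fst snd qa qb qc qd].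
  fold tc. f_equal; ring.
Qed.

Definition mulQ (x y : Q4) : Q4 :=
  let '(mkQ a b c d) := x in let '(mkQ e f g h) := y in
  mkQ (a*e - b*f + c*g - d*h) (a*f + b*e + c*h + d*g)
      (a*g - b*h + c*e - d*f + c*g - d*h) (a*h + b*g + c*f + d*e + c*h + d*g).
Definition addQ (x y : Q4) : Q4 :=
  mkQ (qa x + qa y) (qb x + qb y) (qc x + qc y) (qd x + qd y).
Definition negQ (x : Q4) : Q4 := mkQ (- qa x) (- qb x) (- qc x) (- qd x).
Definition subQ x y := addQ x (negQ y).
Definition sigQ (x : Q4) : Q4 := mkQ (qa x + qc x) (qb x + qd x) (- qc x) (- qd x).
Definition oneQ := mkQ 1 0 0 0.
Definition IQ := mkQ 0 1 0 0.

Ltac zr := repeat rewrite ?plus_IZR, ?minus_IZR, ?mult_IZR, ?opp_IZR.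

Lemma evt_mul t x y : t * t = t + 1 -> evt t (mulQ x y) = Cmult (evt t x) (evt t y).
Proof.
  intro H. destruct x as [a b c d], y as [e f g h].
  unfold evt, mulQ, Cmult; cbn [fst snd qa qb qc qd]. zr. f_equal; nsatz.
Qed.
Lemma evt_add t x y : evt t (addQ x y) = Cplus (evt t x) (evt t y).
Proof. destruct x, y; unfold evt, addQ, Cplus; cbn [fst snd qa qb qc qd]. zr. f_equal; ring. Qed.
Lemma evt_neg t x : evt t (negQ x) = Copp (evt t x).
Proof. destruct x; unfold evt, negQ, Copp; cbn [fst snd qa qb qc qd]. zr. f_equal; ring. Qed.
Lemma evt_sub t x y : evt t (subQ x y) = Cminus (evt t x) (evt t y).
Proof. unfold subQ, Cminus. rewrite evt_add, evt_neg. reflexivity. Qed.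
Lemma ev_sig x : evt tt (sigQ x) = evt tc x.
Proof. destruct x; unfold evt, sigQ; cbn [qa qb qc qd]. rewrite tc_tt. zr. f_equal; ring. Qed.
Lemma evs_sig x : evt tc (sigQ x) = evt tt x.
Proof. destruct x; unfold evt, sigQ; cbn [qa qb qc qd]. rewrite tc_tt. zr. f_equal; ring. Qed.
Lemma evt_I t : evt t IQ = Ci.
Proof. unfold evt, IQ, Ci; cbn [qa qb qc qd]. f_equal; ring. Qed.

Lemma sq5_aux : forall n m c, (Z.abs_nat c < n)%nat -> (m*m = 5*c*c)%Z -> c = 0%Z.
Proof.
  induction n; intros m c Hn H. lia.
  destruct (Z.eq_dec c 0) as [|Hc]; auto.
  assert (Hm : (m mod 5 = 0)%Z).
  { assert (E: ((m*m) mod 5 = ((m mod 5)*(m mod 5)) mod 5)%Z) by (apply Z.mul_mod; lia).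
    rewrite H in E. replace (5*c*c)%Z with ((c*c)*5)%Z in E by ring.
    rewrite Z.mod_mul in E by lia.
    assert (R: (0 <= m mod 5 < 5)%Z) by (apply Z.mod_pos_bound; lia).
    assert (D: (m mod 5 = 0 \/ m mod 5 = 1 \/ m mod 5 = 2 \/ m mod 5 = 3 \/ m mod 5 = 4)%Z) by lia.
    destruct D as [D|[D|[D|[D|D]]]]; auto; rewrite D in E; cbn in E; discriminate. }
  pose proof (Z.div_mod m 5 ltac:(lia)) as Hd. rewrite Hm in Hd.
  set (k := (m / 5)%Z) in *.
  assert (Hk : (c*c = 5*k*k)%Z) by nia.
  assert (k = 0)%Z.
  { apply (IHn c k); [|exact Hk]. assert (k*k < c*c)%Z by nia. nia. }
  subst k. nia.
Qed.

Lemma irr_tt a c : IZR a + IZR c * tt = 0 -> a = 0%Z /\ c = 0%Z.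
Proof.
  intro H. unfold tt in H. pose proof s5.
  assert (E : IZR ((2*a+c)*(2*a+c)) = IZR (5*c*c)).
  { zr. replace (IZR 2 * IZR a + IZR c) with (- (IZR c * sqrt 5)) by lra.
    transitivity (IZR c * IZR c * (sqrt 5 * sqrt 5)); [ring | rewrite s5; ring]. }
  apply eq_IZR in E. apply (sq5_aux (S (Z.abs_nat c))) in E; [|lia].
  subst c. split; auto. apply eq_IZR. lra.
Qed.
Lemma irr_tc a c : IZR a + IZR c * tc = 0 -> a = 0%Z /\ c = 0%Z.
Proof.
  intro H. unfold tc in H. pose proof s5.
  assert (E : IZR ((2*a+c)*(2*a+c)) = IZR (5*c*c)).
  { zr. replace (IZR 2 * IZR a + IZR c) with ((IZR c * sqrt 5)) by lra.
    transitivity (IZR c * IZR c * (sqrt 5 * sqrt 5)); [ring | rewrite s5; ring]. }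
  apply eq_IZR in E. apply (sq5_aux (S (Z.abs_nat c))) in E; [|lia].
  subst c. split; auto. apply eq_IZR. lra.
Qed.

Lemma Cmod_le_sum (p q : R) : Cmod (p, q) <= Rabs p + Rabs q.
Proof.
  unfold Cmod; cbn [fst snd].
  rewrite <- (sqrt_pow2 (Rabs p + Rabs q)) by (pose proof (Rabs_pos p); pose proof (Rabs_pos q); lra).
  apply sqrt_le_1_alt. rewrite <- (pow2_abs p), <- (pow2_abs q).
  pose proof (Rabs_pos p); pose proof (Rabs_pos q). nra.
Qed.

Lemma evt_bound t q N : Rabs t <= 2 -> boxN N (qa q) (qb q) (qc q) (qd q) ->
  Cmod (evt t q) <= 6 * N.
Proof.
  intros Ht [Ha [Hb [Hc Hd]]]. unfold evt.
  eapply Rle_trans; [apply Cmod_le_sum|].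
  pose proof (Rabs_triang (IZR (qa q)) (IZR (qc q) * t)).
  pose proof (Rabs_triang (IZR (qb q)) (IZR (qd q) * t)).
  rewrite Rabs_mult in *.
  pose proof (Rabs_pos (IZR (qc q))); pose proof (Rabs_pos (IZR (qd q))); pose proof (Rabs_pos t).
  nra.
Qed.

Definition DQ x1 x2 := subQ (mulQ x1 (sigQ x2)) (mulQ IQ (mulQ (sigQ x1) x2)).

Lemma Ci_comm u v : Cmult Ci (Cmult u v) = Cmult u (Cmult Ci v).
Proof. destruct u, v; unfold Cmult, Ci; cbn [fst snd]; f_equal; ring. Qed.

Lemma ev_DQ x1 x2 : evt tt (DQ x1 x2) =
  detX (evt tt x1) (evt tc x1) (evt tt x2) (evt tc x2).
Proof.
  unfold DQ, detX. rewrite evt_sub, !evt_mul, !ev_sig, evt_I by apply tt_eq.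
  rewrite Ci_comm. reflexivity.
Qed.
Lemma evs_DQ x1 x2 : evt tc (DQ x1 x2) =
  Cminus (Cmult (evt tc x1) (evt tt x2)) (Cmult (evt tt x1) (Cmult Ci (evt tc x2))).
Proof.
  unfold DQ. rewrite evt_sub, !evt_mul, !evs_sig, evt_I by apply tc_eq.
  rewrite Ci_comm. reflexivity.
Qed.

Lemma ev_zero_evs q : evt tt q = RtoC 0 -> evt tc q = RtoC 0.
Proof.
  unfold evt, RtoC; intro H; injection H; intros H2 H1.
  apply irr_tt in H1 as [-> ->]; apply irr_tt in H2 as [-> ->]. f_equal; ring.
Qed.
Lemma evs_zero_ev q : evt tc q = RtoC 0 -> evt tt q = RtoC 0.
Proof.
  unfold evt, RtoC; intro H; injection H; intros H2 H1.
  apply irr_tc in H1 as [-> ->]; apply irr_tc in H2 as [-> ->]. f_equal; ring.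
Qed.

Lemma norm_prod q : exists g1 g2 : Z,
  Cmult (evt tt q) (evt tc q) = (IZR g1, IZR g2).
Proof.
  destruct q as [a b c d].
  exists (a*a - b*b + a*c - b*d - c*c + d*d)%Z, (2*a*b + a*d + b*c - 2*c*d)%Z.
  unfold evt, Cmult; cbn [fst snd qa qb qc qd]. zr.
  assert (S1 : tt + tc = 1) by (rewrite tc_tt; ring).
  assert (S2 : tt * tc = -1) by (rewrite tc_tt; pose proof tt_eq; nra).
  f_equal; nsatz.
Qed.

Lemma Cmod_pos_ne z : z <> RtoC 0 -> 0 < Cmod z.
Proof. intro H. apply Cmod_gt_0. exact H. Qed.

Lemma norm_ge1 q : evt tt q <> RtoC 0 -> 1 <= Cmod (evt tt q) * Cmod (evt tc q).
Proof.
  intro H.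
  assert (H' : evt tc q <> RtoC 0) by (intro E; apply H, evs_zero_ev, E).
  pose proof (Cmod_pos_ne _ H). pose proof (Cmod_pos_ne _ H').
  rewrite <- Cmod_mult. destruct (norm_prod q) as [g1 [g2 E]]. rewrite E.
  assert (P : 0 < Cmod (IZR g1, IZR g2)) by (rewrite <- E, Cmod_mult; nra).
  unfold Cmod in *; cbn [fst snd] in *.
  assert (Z : (0 < g1*g1 + g2*g2)%Z).
  { apply lt_IZR. zr. destruct (Rle_lt_dec (IZR g1 ^ 2 + IZR g2 ^ 2) 0) as [L|L].
    - assert (IZR g1 ^ 2 + IZR g2 ^ 2 = 0) by nra. rewrite H2, sqrt_0 in P. lra.
    - simpl in L. lra. }
  assert (Z1 : (1 <= g1*g1 + g2*g2)%Z) by lia. apply IZR_le in Z1. zr.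
  rewrite <- sqrt_1. apply sqrt_le_1_alt.
  replace (IZR g1 ^ 2 + IZR g2 ^ 2) with (IZR g1 * IZR g1 + IZR g2 * IZR g2) by ring. rewrite plus_IZR, !mult_IZR in Z1. exact Z1.
Qed.

Lemma Cmod_minus_le u v : Cmod (Cminus u v) <= Cmod u + Cmod v.
Proof. unfold Cminus. eapply Rle_trans; [apply Cmod_triangle|]. rewrite Cmod_opp. lra. Qed.

Lemma lower_core N x1 x2 : 1 <= N ->
  boxN N (qa x1) (qb x1) (qc x1) (qd x1) -> boxN N (qa x2) (qb x2) (qc x2) (qd x2) ->
  evt tt x1 <> RtoC 0 -> evt tt x2 <> RtoC 0 ->
  1 / (72 * N^2) <= Cmod (evt tt (DQ x1 x2)).
Proof.
  intros HN B1 B2 H1 H2.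
  assert (HD : evt tt (DQ x1 x2) <> RtoC 0).
  { intro E. pose proof (ev_zero_evs _ E) as E'.
    rewrite ev_DQ in E. rewrite evs_DQ in E'.
    assert (P : Cmult (evt tt x1) (evt tc x2) = RtoC 0).
    { destruct (evt tt x1) as [p1 p2], (evt tc x1) as [q1 q2],
        (evt tt x2) as [r1 r2], (evt tc x2) as [s1 s2].
      unfold detX, Cminus, Cplus, Copp, Cmult, Ci, RtoC in *; cbn [fst snd] in *.
      injection E; injection E'; intros. f_equal; nra. }
    apply (f_equal Cmod) in P. rewrite Cmod_mult, Cmod_0 in P.
    apply Rmult_integral in P as [P|P].
    - apply H1, Cmod_eq_0, P.
    - apply H2, evs_zero_ev, Cmod_eq_0, P. }
  pose proof (norm_ge1 _ HD) as Hn.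
  assert (Hb : Cmod (evt tc (DQ x1 x2)) <= 72 * N^2).
  { rewrite evs_DQ. eapply Rle_trans; [apply Cmod_minus_le|].
    rewrite !Cmod_mult, Cmod_Ci.
    assert (T1 : Rabs tt <= 2) by (pose proof tt_bnd; rewrite Rabs_pos_eq; lra).
    assert (T2 : Rabs tc <= 2) by (rewrite tc_tt; pose proof tt_bnd; apply Rabs_le; lra).
    pose proof (evt_bound _ _ _ T1 B1). pose proof (evt_bound _ _ _ T2 B1).
    pose proof (evt_bound _ _ _ T1 B2). pose proof (evt_bound _ _ _ T2 B2).
    pose proof (Cmod_ge_0 (evt tt x1)). pose proof (Cmod_ge_0 (evt tc x1)).
    pose proof (Cmod_ge_0 (evt tt x2)). pose proof (Cmod_ge_0 (evt tc x2)).
    assert (Cmod (evt tc x1) * Cmod (evt tt x2) <= 6*N * (6*N)) by (apply Rmult_le_compat; lra).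
    assert (Cmod (evt tt x1) * Cmod (evt tc x2) <= 6*N * (6*N)) by (apply Rmult_le_compat; lra).
    nra. }
  pose proof (Cmod_ge_0 (evt tt (DQ x1 x2))).
  pose proof (Cmod_ge_0 (evt tc (DQ x1 x2))).
  assert (0 < N^2) by nra.
  apply (Rmult_le_reg_r (72 * N^2)); [lra|].
  replace (1 / (72 * N ^ 2) * (72 * N ^ 2)) with 1 by (field; lra).
  eapply Rle_trans; [exact Hn|]. apply Rmult_le_compat_l; lra.
Qed.

Lemma pow_lt_S a b n : 0 <= a < b -> a ^ (S n) < b ^ (S n).
Proof.
  intros [Ha Hab]. induction n.
  - simpl; lra.
  - change (a * a ^ S n < b * b ^ S n).
    pose proof (pow_le a (S n) Ha).
    apply Rle_lt_trans with (a * b ^ S n).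
    + apply Rmult_le_compat_l; lra.
    + apply Rmult_lt_compat_r; [apply pow_lt; lra | lra].
Qed.

Lemma rp_bound (x N e : R) (p : nat) : 0 <= x -> 0 < N -> e * 5 = INR p ->
  x ^ 5 <= N ^ p -> x <= Rpower N e.
Proof.
  intros Hx HN He H.
  assert (Hr : 0 < Rpower N e) by (unfold Rpower; apply exp_pos).
  assert (E : Rpower N e ^ 5 = N ^ p).
  { rewrite <- (Rpower_pow 5) by exact Hr. rewrite Rpower_mult.
    replace (INR 5) with 5 by (simpl; lra). rewrite He. apply Rpower_pow; exact HN. }
  destruct (Rle_lt_dec x (Rpower N e)) as [L|L]; auto.
  exfalso. pose proof (pow_lt_S (Rpower N e) x 4 ltac:(lra)). lra.
Qed.

Lemma powkj x k j : x ^ (k * j) = (x ^ j) ^ k.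
Proof. rewrite pow_mult, <- !pow_mult, Nat.mul_comm. reflexivity. Qed.

Lemma find_j q X : 1 < q -> 1 <= X -> exists j, q ^ j <= X < q ^ (S j).
Proof.
  intros Hq HX.
  destruct (Pow_x_infinity q ltac:(rewrite Rabs_pos_eq; lra) (X + 1)) as [n0 Hn0].
  specialize (Hn0 n0 (Nat.le_refl _)).
  rewrite Rabs_pos_eq in Hn0 by (apply pow_le; lra).
  assert (Hlt : X < q ^ n0) by lra. clear Hn0.
  induction n0.
  - simpl in Hlt. lra.
  - destruct (Rlt_le_dec X (q ^ n0)) as [L|L]; auto. exists n0. lra.
Qed.

Lemma glb_lower (E : R -> Prop) m r0 : (forall r, E r -> m <= r) -> E r0 ->
  m <= real (Glb_Rbar E).
Proof.
  intros H H0. destruct (Glb_Rbar_correct E) as [H1 H2].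
  assert (A : Rbar_le m (Glb_Rbar E)) by (apply H2; intros x Hx; apply H, Hx).
  assert (B := H1 r0 H0).
  destruct (Glb_Rbar E); simpl in *; auto; contradiction.
Qed.
Lemma glb_upper (E : R -> Prop) r0 : (forall r, E r -> 0 <= r) -> E r0 ->
  real (Glb_Rbar E) <= r0.
Proof.
  intros H H0. destruct (Glb_Rbar_correct E) as [H1 H2].
  assert (A : Rbar_le 0 (Glb_Rbar E)) by (apply H2; intros x Hx; apply H, Hx).
  assert (B := H1 r0 H0).
  destruct (Glb_Rbar E); simpl in *; auto; contradiction.
Qed.

Lemma det_values_nonneg N1 N2 r : det_values N1 N2 r -> 0 <= r.
Proof. intros (a1&b1&c1&d1&a2&b2&c2&d2&_&_&_&_&->). apply Cmod_ge_0. Qed.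

Lemma elem_q q : elemE (qa q) (qb q) (qc q) (qd q) = evt tt q.
Proof. rewrite ev_elem. destruct q; reflexivity. Qed.
Lemma sigma_q q : sigmaE (qa q) (qb q) (qc q) (qd q) = evt tc q.
Proof. rewrite evs_sigma. destruct q; reflexivity. Qed.

Lemma det_values_intro N1 N2 x1 x2 :
  boxN N1 (qa x1) (qb x1) (qc x1) (qd x1) -> boxN N2 (qa x2) (qb x2) (qc x2) (qd x2) ->
  evt tt x1 <> RtoC 0 -> evt tt x2 <> RtoC 0 ->
  det_values N1 N2 (Cmod (evt tt (DQ x1 x2))).
Proof.
  intros B1 B2 H1 H2.
  exists (qa x1), (qb x1), (qc x1), (qd x1), (qa x2), (qb x2), (qc x2), (qd x2).
  rewrite !elem_q, !sigma_q, ev_DQ. auto.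
Qed.

Lemma det_values_lower N r : 1 <= N -> det_values N N r -> 1 / (72 * N^2) <= r.
Proof.
  intros HN (a1&b1&c1&d1&a2&b2&c2&d2&B1&B2&H1&H2&->).
  rewrite !ev_elem, !evs_sigma in *. rewrite <- ev_DQ.
  apply lower_core; auto.
Qed.

Lemma det_values_mono N1 N2 M1 M2 r : N1 <= M1 -> N2 <= M2 ->
  det_values N1 N2 r -> det_values M1 M2 r.
Proof.
  intros L1 L2 (a1&b1&c1&d1&a2&b2&c2&d2&B1&B2&H).
  exists a1, b1, c1, d1, a2, b2, c2, d2.
  unfold boxN in *. split; [|split]; [lra|lra|exact H].
Qed.

Definition TQ := mkQ 0 0 1 0.
Definition TiQ := mkQ (-1) 0 1 0.
Definition powQ q n := Nat.iter n (mulQ q) oneQ.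

Lemma evt_pow t q p n : t * t = t + 1 -> evt t q = (p, 0) -> evt t (powQ q n) = (p ^ n, 0).
Proof.
  intros Ht Hq. induction n.
  - unfold powQ, evt, oneQ; simpl Nat.iter; cbn [qa qb qc qd]. f_equal; ring.
  - change (powQ q (S n)) with (mulQ q (powQ q n)). rewrite evt_mul by exact Ht.
    rewrite Hq, IHn. unfold Cmult; cbn [fst snd]. simpl pow. f_equal; ring.
Qed.
Lemma evt_T t : evt t TQ = (t, 0).
Proof. unfold evt, TQ; cbn [qa qb qc qd]. f_equal; ring. Qed.
Lemma evt_Ti t : evt t TiQ = (t - 1, 0).
Proof. unfold evt, TiQ; cbn [qa qb qc qd]. f_equal; ring. Qed.

Definition X1 j := addQ (addQ (powQ TiQ (6*j)) (mulQ TiQ (powQ TQ (2*j))))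
  (mulQ IQ (negQ (addQ (mulQ TiQ (powQ TiQ (2*j))) (powQ TQ (6*j))))).
Definition WQ j := addQ (subQ (powQ TiQ (4*j)) (powQ TQ (4*j))) (mulQ IQ TiQ).

Lemma evt_X1 t j : t * t = t + 1 -> evt t (X1 j) =
  ((t-1)^(6*j) + (t-1) * t^(2*j), - ((t-1) * (t-1)^(2*j) + t^(6*j))).
Proof.
  intro Ht. unfold X1.
  rewrite !evt_add, !evt_mul, evt_neg, evt_add, !evt_mul, evt_I by exact Ht.
  rewrite !(evt_pow t _ _ _ Ht (evt_Ti t)), !(evt_pow t _ _ _ Ht (evt_T t)), !evt_Ti.
  unfold Cplus, Cmult, Copp, Ci; cbn [fst snd]. f_equal; ring.
Qed.
Lemma evt_W t j : t * t = t + 1 -> evt t (WQ j) = ((t-1)^(4*j) - t^(4*j), t - 1).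
Proof.
  intro Ht. unfold WQ.
  rewrite evt_add, evt_sub, evt_mul, evt_I by exact Ht.
  rewrite !(evt_pow t _ _ _ Ht (evt_Ti t)), !(evt_pow t _ _ _ Ht (evt_T t)), !evt_Ti.
  unfold Cminus, Cplus, Cmult, Copp, Ci; cbn [fst snd]. f_equal; ring.
Qed.

Lemma powcomm x j k : (x ^ j) ^ k = (x ^ k) ^ j.
Proof. rewrite <- !pow_mult, Nat.mul_comm. reflexivity. Qed.

Section Pows.
Variable j : nat.
Let a := tt ^ j.
Let b := (tt - 1) ^ j.
Lemma ab1 : a * b = 1.
Proof. unfold a, b. rewrite <- Rpow_mult_distr. replace (tt * (tt - 1)) with 1 by (pose proof tt_eq; lra). apply pow1. Qed.

Lemma ev_X1' : evt tt (X1 j) = (b^6 + (tt-1) * a^2, - ((tt-1) * b^2 + a^6)).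
Proof. rewrite evt_X1 by apply tt_eq. unfold a, b. rewrite !powkj. reflexivity. Qed.
Lemma evs_X1' : evt tc (X1 j) = (a^6 + (tc-1) * b^2, - ((tc-1) * a^2 + b^6)).
Proof.
  rewrite evt_X1 by apply tc_eq. unfold a, b. rewrite !powkj, !(powcomm _ j).
  replace ((tc - 1)^6) with (tt^6) by (rewrite tc_tt; ring).
  replace ((tc - 1)^2) with (tt^2) by (rewrite tc_tt; ring).
  replace (tc^2) with ((tt-1)^2) by (rewrite tc_tt; ring).
  replace (tc^6) with ((tt-1)^6) by (rewrite tc_tt; ring).
  reflexivity.
Qed.
Lemma ev_W' : evt tt (WQ j) = (b^4 - a^4, tt - 1).
Proof. rewrite evt_W by apply tt_eq. unfold a, b. rewrite !powkj. reflexivity. Qed.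
Lemma evs_W' : evt tc (WQ j) = (a^4 - b^4, tc - 1).
Proof.
  rewrite evt_W by apply tc_eq. unfold a, b. rewrite !powkj, !(powcomm _ j).
  replace ((tc - 1)^4) with (tt^4) by (rewrite tc_tt; ring).
  replace (tc^4) with ((tt-1)^4) by (rewrite tc_tt; ring).
  reflexivity.
Qed.
End Pows.

Lemma Rabs_minus_le2 x y : Rabs (x - y) <= Rabs x + Rabs y.
Proof. unfold Rminus. eapply Rle_trans; [apply Rabs_triang|]. rewrite Rabs_Ropp. lra. Qed.

Lemma coord2 a c M : Rabs (IZR a + IZR c * tt) <= M -> Rabs (IZR a + IZR c * tc) <= M ->
  Rabs (IZR a) <= M /\ Rabs (IZR c) <= M.
Proof.
  set (u := IZR a + IZR c * tt). set (v := IZR a + IZR c * tc). intros Hu Hv.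
  assert (Ea : IZR a * (tt - tc) = tt * v - tc * u) by (unfold u, v; ring).
  assert (Ec : IZR c * (tt - tc) = u - v) by (unfold u, v; ring).
  assert (Hs : 2 < tt - tc) by (unfold tt, tc; pose proof s5pos; lra).
  assert (Htc : tc < 0) by (unfold tc; pose proof s5pos; lra).
  assert (Htt : 0 < tt) by (unfold tt; pose proof s5pos; lra).
  split.
  - apply (Rmult_le_reg_r (tt - tc)); [lra|].
    rewrite <- (Rabs_pos_eq (tt - tc)) at 1 by lra. rewrite <- Rabs_mult, Ea.
    eapply Rle_trans; [apply Rabs_minus_le2|]. rewrite !Rabs_mult.
    rewrite (Rabs_pos_eq tt) by lra. rewrite (Rabs_left tc) by lra.
    pose proof (Rabs_pos u); pose proof (Rabs_pos v). nra.
  - apply (Rmult_le_reg_r (tt - tc)); [lra|].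
    rewrite <- (Rabs_pos_eq (tt - tc)) at 1 by lra. rewrite <- Rabs_mult, Ec.
    eapply Rle_trans; [apply Rabs_minus_le2|].
    assert (0 <= M) by (pose proof (Rabs_pos u); lra). nra.
Qed.

Lemma coords q M :
  Rabs (fst (evt tt q)) <= M -> Rabs (fst (evt tc q)) <= M ->
  Rabs (snd (evt tt q)) <= M -> Rabs (snd (evt tc q)) <= M ->
  boxN M (qa q) (qb q) (qc q) (qd q).
Proof.
  unfold evt; cbn [fst snd]. intros H1 H2 H3 H4.
  destruct (coord2 _ _ _ H1 H2). destruct (coord2 _ _ _ H3 H4). unfold boxN; tauto.
Qed.

Lemma delta_alg a b t : a * b = 1 -> t * t = t + 1 ->
  detX (b^6 + (t-1) * a^2, - ((t-1) * b^2 + a^6))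
       (a^6 + ((1-t)-1) * b^2, - (((1-t)-1) * a^2 + b^6))
       (a^4 - b^4, (1-t) - 1) (b^4 - a^4, t - 1) = (2 * b^10, 0).
Proof.
  intros Hab Ht. unfold detX, Cminus, Cplus, Copp, Cmult, Ci; cbn [fst snd].
  assert (Z1 : a * b - 1 = 0) by lra. assert (Z2 : t * t - t - 1 = 0) by lra.
  f_equal.
  - match goal with |- ?L = ?R => assert (E : L - R =
      ((-3)*b^2 + (-3)*a^1*b^3 + (-2)*a^2*b^4 + (-2)*a^3*b^5) * (a * b - 1)
      + ((2)*b^2) * (t * t - t - 1)) by ring end.
    rewrite Z1, Z2 in E. lra.
  - match goal with |- ?L = ?R => assert (E : L - R =
      ((-1)*a^2 + (2)*a^2*t^1 + (-1)*a^3*b^1 + (2)*a^3*b^1*t^1) * (a * b - 1)) by ring end.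
    rewrite Z1 in E. lra.
Qed.

Definition Kc : R := 497664.

Lemma partB N : 1 <= N -> exists r,
  det_values (Rpower N (3/5)) (Rpower N (2/5)) r /\ r <= Kc / N.
Proof.
  intro HN.
  assert (P1 : forall x, 0 <= x -> x^5 <= N^3 -> x <= Rpower N (3/5)).
  { intros x Hx H. apply (rp_bound x N (3/5) 3); auto; [lra | simpl; lra]. }
  assert (P2 : forall x, 0 <= x -> x^5 <= N^2 -> x <= Rpower N (2/5)).
  { intros x Hx H. apply (rp_bound x N (2/5) 2); auto; [lra | simpl; lra]. }
  pose proof tt_bnd as Tb.
  destruct (Rlt_le_dec N 243) as [Hs|Hl].
  - exists (Cmod (evt tt (DQ oneQ oneQ))). split.
    + assert (O1 : 1 <= Rpower N (3/5)) by (apply P1; [lra|]; rewrite pow1; apply pow_R1_Rle; lra).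
      assert (O2 : 1 <= Rpower N (2/5)) by (apply P2; [lra|]; rewrite pow1; apply pow_R1_Rle; lra).
      apply det_values_intro.
      * unfold boxN, oneQ; cbn [qa qb qc qd]. rewrite Rabs_R1, Rabs_R0. repeat split; lra.
      * unfold boxN, oneQ; cbn [qa qb qc qd]. rewrite Rabs_R1, Rabs_R0. repeat split; lra.
      * unfold evt, oneQ, RtoC; cbn [qa qb qc qd]. intro E; injection E; intros; lra.
      * unfold evt, oneQ, RtoC; cbn [qa qb qc qd]. intro E; injection E; intros; lra.
    + rewrite ev_DQ. unfold detX, evt, oneQ, Cminus, Cplus, Copp, Cmult, Ci; cbn [fst snd qa qb qc qd].
      eapply Rle_trans; [apply Cmod_le_sum|].
      apply Rle_trans with 2.
      * right. match goal with |- Rabs ?x + Rabs ?y = _ =>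
          replace x with 1 by ring; replace y with (- 1) by ring end.
        rewrite Rabs_R1, (Rabs_left (-1)) by lra. lra.
      * apply (Rmult_le_reg_r N); [lra|].
        replace (Kc / N * N) with Kc by (field; lra). unfold Kc. lra.
  - destruct (find_j (tt ^ 10) (N / 243)) as [j [Hj1 Hj2]].
    { pose proof (Rlt_pow tt 0 10 ltac:(lra) ltac:(lia)) as H. rewrite pow_O in H. exact H. }
    { apply (Rmult_le_reg_r 243); [lra|]. unfold Rdiv. rewrite Rmult_assoc, Rinv_l by lra. lra. }
    set (a := tt ^ j) in *. set (b := (tt - 1) ^ j) in *.
    assert (Hab : a * b = 1) by apply ab1.
    assert (Ha : 1 <= a) by (apply pow_R1_Rle; lra).
    assert (Hb : 0 < b) by (apply pow_lt; lra).
    assert (Hb1 : b <= 1) by nra.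
    assert (EA : (tt ^ 10) ^ j = a ^ 10) by (unfold a; apply powcomm).
    rewrite EA in Hj1. rewrite <- tech_pow_Rmult, EA in Hj2.
    assert (T10 : tt ^ 10 <= 1024).
    { replace 1024 with (2 ^ 10) by (simpl; lra). apply pow_incr; lra. }
    set (A := a ^ 10) in *.
    assert (HA : 1 <= A) by (apply pow_R1_Rle; lra).
    assert (HN1 : 243 * A <= N).
    { apply (Rmult_le_reg_r (/ 243)); [lra|]. replace (243 * A * / 243) with A by field. exact Hj1. }
    assert (HN2 : N < 243 * tt ^ 10 * A).
    { apply (Rmult_lt_reg_r (/ 243)); [lra|]. replace (243 * tt ^ 10 * A * / 243) with (tt ^ 10 * A) by field. exact Hj2. }
    assert (a2 : 1 <= a ^ 2) by (apply pow_R1_Rle; lra).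
    assert (a4 : a ^ 2 <= a ^ 4) by (replace (a^4) with (a^2 * a^2) by ring; nra).
    assert (a6 : a ^ 4 <= a ^ 6) by (replace (a^6) with (a^4 * a^2) by ring; nra).
    assert (b2 : 0 < b ^ 2 <= 1) by (split; [apply pow_lt; lra|]; replace 1 with (1 ^ 2) by ring; apply pow_incr; lra).
    assert (b4 : 0 < b ^ 4 <= 1) by (split; [apply pow_lt; lra|]; replace 1 with (1 ^ 4) by ring; apply pow_incr; lra).
    assert (b6 : 0 < b ^ 6 <= 1) by (split; [apply pow_lt; lra|]; replace 1 with (1 ^ 6) by ring; apply pow_incr; lra).
    assert (Hb10 : b ^ 10 * A = 1) by (unfold A; rewrite <- Rpow_mult_distr, Rmult_comm, Hab; apply pow1).
    exists (Cmod (evt tt (DQ (X1 j) (sigQ (WQ j))))). split.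
    + apply det_values_intro.
      * apply coords.
        -- rewrite ev_X1'. cbn [fst]. fold a b.
           assert (3 * a^6 <= Rpower N (3/5)).
           { apply P1; [nra|]. replace ((3 * a^6)^5) with (243 * A^3) by (unfold A; ring).
             apply Rle_trans with ((243 * A)^3); [ simpl; nra | apply pow_incr; lra]. }
           apply Rle_trans with (3 * a^6); [|assumption]. apply Rabs_le. nra.
        -- rewrite evs_X1'. cbn [fst]. fold a b.
           assert (3 * a^6 <= Rpower N (3/5)).
           { apply P1; [nra|]. replace ((3 * a^6)^5) with (243 * A^3) by (unfold A; ring).
             apply Rle_trans with ((243 * A)^3); [ simpl; nra | apply pow_incr; lra]. }
           apply Rle_trans with (3 * a^6); [|assumption]. rewrite tc_tt. apply Rabs_le. nra.
        -- rewrite ev_X1'. cbn [snd]. fold a b.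
           assert (3 * a^6 <= Rpower N (3/5)).
           { apply P1; [nra|]. replace ((3 * a^6)^5) with (243 * A^3) by (unfold A; ring).
             apply Rle_trans with ((243 * A)^3); [ simpl; nra | apply pow_incr; lra]. }
           apply Rle_trans with (3 * a^6); [|assumption]. apply Rabs_le. nra.
        -- rewrite evs_X1'. cbn [snd]. fold a b.
           assert (3 * a^6 <= Rpower N (3/5)).
           { apply P1; [nra|]. replace ((3 * a^6)^5) with (243 * A^3) by (unfold A; ring).
             apply Rle_trans with ((243 * A)^3); [ simpl; nra | apply pow_incr; lra]. }
           apply Rle_trans with (3 * a^6); [|assumption]. rewrite tc_tt. apply Rabs_le. nra.
      * assert (3 * a^4 <= Rpower N (2/5)).
        { apply P2; [nra|]. replace ((3 * a^4)^5) with (243 * A^2) by (unfold A; ring).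
          apply Rle_trans with ((243 * A)^2); [ simpl; nra | apply pow_incr; lra]. }
        apply coords; rewrite ?ev_sig, ?evs_sig, ?ev_W', ?evs_W'; cbn [fst snd]; fold a b;
          (apply Rle_trans with (3 * a^4); [|assumption]); rewrite ?tc_tt; apply Rabs_le; nra.
      * rewrite ev_X1'. fold a b. unfold RtoC. intro E; injection E; intros E2 E1.
        nra.
      * rewrite ev_sig, evs_W'. fold a b. unfold RtoC. intro E; injection E; intros E2 E1.
        rewrite tc_tt in E2. lra.
    + rewrite ev_DQ, ev_sig, evs_sig, ev_X1', evs_X1', ev_W', evs_W'. fold a b.
      rewrite tc_tt, delta_alg by (auto; apply tt_eq).
      unfold Cmod; cbn [fst snd].
      replace ((2 * b ^ 10) ^ 2 + 0 ^ 2) with ((2 * b ^ 10) ^ 2) by ring.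
      rewrite sqrt_pow2 by (pose proof (pow_lt b 10 Hb); lra).
      apply (Rmult_le_reg_r N); [lra|].
      replace (Kc / N * N) with Kc by (field; lra). unfold Kc.
      assert (0 < b ^ 10) by (apply pow_lt; lra).
      assert (2 * b ^ 10 * N <= 2 * b^10 * (243 * tt ^ 10 * A)) by nra.
      assert (2 * b^10 * (243 * tt ^ 10 * A) = 486 * tt ^ 10) by (transitivity (486 * tt ^ 10 * (b ^ 10 * A)); [ring | rewrite Hb10; ring]).
      nra.
Qed.

Lemma one_witness N : 1 <= N -> det_values N N (Cmod (evt tt (DQ oneQ oneQ))).
Proof.
  intro HN. apply det_values_intro.
  - unfold boxN, oneQ; cbn [qa qb qc qd]. rewrite Rabs_R1, Rabs_R0. repeat split; lra.
  - unfold boxN, oneQ; cbn [qa qb qc qd]. rewrite Rabs_R1, Rabs_R0. repeat split; lra.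
  - unfold evt, oneQ, RtoC; cbn [qa qb qc qd]. intro E; injection E; intros; lra.
  - unfold evt, oneQ, RtoC; cbn [qa qb qc qd]. intro E; injection E; intros; lra.
Qed.

Theorem corollary3p2 :
  (exists K : R, 0 < K /\
     forall N : R, 1 <= N -> Dmin (Rpower N (3/5)) (Rpower N (2/5)) <= K / N) /\
  (exists Cl Cu : R, 0 < Cl /\ 0 < Cu /\
     exists N0 : R, forall N : R, N0 <= N ->
       Cl / N ^ 2 <= Dmin N N /\ Dmin N N <= Cu / Rpower N (5/3)).
Proof.
  split.
  - exists Kc. split; [unfold Kc; lra|]. intros N HN.
    destruct (partB N HN) as [r [Hr Hle]]. unfold Dmin.
    eapply Rle_trans; [apply glb_upper with (r0 := r); [apply det_values_nonneg | exact Hr] | exact Hle].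
  - exists (1/72), Kc. split; [lra|]. split; [unfold Kc; lra|]. exists 1. intros N HN. split.
    + unfold Dmin. apply glb_lower with (r0 := Cmod (evt tt (DQ oneQ oneQ))).
      * intros r Hr. replace (1 / 72 / N ^ 2) with (1 / (72 * N ^ 2)) by (field; nra).
        apply det_values_lower; auto.
      * apply one_witness; auto.
    + set (M := Rpower N (5/3)).
      assert (HM : 1 <= M).
      { unfold M. rewrite <- (Rpower_O N) by lra. apply Rle_Rpower; lra. }
      destruct (partB M HM) as [r [Hr Hle]].
      assert (E1 : Rpower M (3/5) = N).
      { unfold M. rewrite Rpower_mult. replace (5/3 * (3/5)) with 1 by field. apply Rpower_1; lra. }
      assert (E2 : Rpower M (2/5) <= N).
      { unfold M. rewrite Rpower_mult. rewrite <- (Rpower_1 N) at 2 by lra. apply Rle_Rpower; lra. }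
      rewrite E1 in Hr. apply (det_values_mono _ _ N N) in Hr; [|lra|lra].
      unfold Dmin. eapply Rle_trans; [apply glb_upper with (r0 := r); [apply det_values_nonneg | exact Hr] | exact Hle].
Qed.
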